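(* Let $n\ge1$. There exists an involution $\phi$ of $B_n$ such that for every $\sigma\in B_n$, \[ \mathrm{maj}_B(\sigma)=\mathrm{rmaj}_{B_n}(\phi(\sigma))\quad\text{and}\quad \mathrm{Neg}(\sigma^{-1})=\mathrm{Neg}(\phi(\sigma)^{-1}). \]
   Context: $[a]=\{1,\dots,a\}$. $B_n$ is the group of bijections $\sigma$ of $\{\pm1,\dots,\pm n\}$ with $\sigma(-i)=-\sigma(i)$, written in window notation $[\sigma(1),\dots,\sigma(n)]$, with product $(\sigma\tau)(i)=\sigma(\tau(i))$. The Coxeter generators are $s_0=[-1,2,\dots,n]$ and $s_i=$ the transposition of $i$ and $i+1$ ($1\le i\le n-1$); $\ell_B$ is the length with respect to them. $\mathrm{Neg}(\sigma)=\{i\in[n]:\sigma(i)<0\}$. $\mathrm{Des}_S(\sigma)=\{1\le i\le n-1:\ell_B(\sigma s_i)<\ell_B(\sigma)\}$, $\mathrm{maj}_B(\sigma)=\sum_{i\in\mathrm{Des}_S(\sigma)}i$, and $\mathrm{rmaj}_{B_n}(\sigma)=\sum_{i\in\mathrm{Des}_S(\sigma)}(n-i)$. *)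

(* Defs.v *)
From mathcomp Require Import all_boot all_fingroup.
Set Implicit Arguments. Unset Strict Implicit. Unset Printing Implicit Defensive.

(* Signed letters: (i, b) : 'I_n * bool encodes +(i+1) if b = false,
   and -(i+1) if b = true. *)
Definition signed (n : nat) := ('I_n * bool)%type.

Definition negs n (x : signed n) : signed n := (x.1, ~~ x.2).

Definition inB n (s : {perm signed n}) : bool :=
  [forall x : signed n, s (negs x) == negs (s x)].

(* Paper's product (s t)(i) = s (t i) is written comp s t; mathcomp's
   (t * s)%g acts as x |-> s (t x). *)
Definition comp n (s t : {perm signed n}) : {perm signed n} := (t * s)%g.

Lemma pred_lt n (i : 'I_n) : i.-1 < n.
Proof. exact: leq_ltn_trans (leq_pred i) (ltn_ord i). Qed.

(* Coxeter generators: gen i with val i = 0 is s_0 = [-1,2,...,n];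
   for 1 <= val i <= n-1, gen i = s_i swaps letters i and i+1 (1-based),
   i.e. 0-based indices i-1 and i, and likewise -i and -(i+1). *)
Definition gen n (i : 'I_n) : {perm signed n} :=
  if val i == 0 then tperm (i, false) (i, true)
  else (tperm (Ordinal (pred_lt i), false) (i, false) *
        tperm (Ordinal (pred_lt i), true) (i, true))%g.

Definition word_prod n (w : seq 'I_n) : {perm signed n} :=
  foldr (fun j acc => comp (gen j) acc) 1%g w.

(* Coxeter length: least k such that s is a product of k generators.
   Every element of B_n has word length < #|B_n| <= #|{perm signed n}|,
   so the bounded minimum below is the genuine minimum. *)
Definition lenB n (s : {perm signed n}) : nat :=
  \big[minn/#|{perm signed n}|]_(k < #|{perm signed n}|.+1 |
        [exists w : k.-tuple 'I_n, word_prod w == s]) k.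

Definition DesS n (s : {perm signed n}) : {set 'I_n} :=
  [set i : 'I_n | (0 < val i) && (lenB (comp s (gen i)) < lenB s)].

Definition majB n (s : {perm signed n}) : nat := \sum_(i in DesS s) val i.
Definition rmajB n (s : {perm signed n}) : nat := \sum_(i in DesS s) (n - val i).

Definition NegB n (s : {perm signed n}) : {set 'I_n} :=
  [set i : 'I_n | (s (i, false)).2].

(* Main.v *)
Require Import Defs.
From mathcomp Require Import all_boot all_fingroup zify.
Set Implicit Arguments. Unset Strict Implicit. Unset Printing Implicit Defensive.

Definition key n (x : signed n) : nat := if x.2 then n.-1 - x.1 else n + x.1.

Lemma key_lt n (x : signed n) : key x < n + n.
Proof. case: x => [i []] /=; rewrite /key /=; have := ltn_ord i; lia. Qed.

Lemma key_negE n (x : signed n) : (key x < n) = x.2.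
Proof. case: x => [i []] /=; rewrite /key /=; have := ltn_ord i; lia. Qed.

Lemma key_negs n (x : signed n) : key (negs x) = (n + n).-1 - key x.
Proof. case: x => [i []] /=; rewrite /key /=; have := ltn_ord i; lia. Qed.

Lemma key_inj n : injective (@key n).
Proof.
move=> [i b] [j c]; rewrite /key /=.
have := ltn_ord i; have := ltn_ord j.
case: b; case: c => /= hj hi h.
- by congr pair; apply: val_inj => /=; lia.
- lia.
- lia.
- by congr pair; apply: val_inj => /=; lia.
Qed.

Definition Inv n (s : {perm signed n}) : {set signed n * signed n} :=
  [set p | (key p.1 < key p.2) && (key (s p.2) < key (s p.1))].

Lemma Inv_adj n (p : {perm signed n}) x y : key y = (key x).+1 ->
  #|Inv (tperm x y * p)| + (key (p y) < key (p x))
  = #|Inv p| + (key (p x) < key (p y)).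
Proof.
move=> kxy.
have kinj := @key_inj n.
set t := tperm x y.
pose f := fun z : signed n * signed n => (t z.1, t z.2).
have finj : injective f.
  by apply: (can_inj (g := f)) => [[u v]]; rewrite /f /= !tpermK.
rewrite (cardsD1 (x,y) (Inv (t * p))) (cardsD1 (x,y) (Inv p)).
have e : Inv (t * p) :\ (x,y) = f @^-1: (Inv p :\ (x,y)).
  have hxy : (x == y) = false by apply/eqP => e; move: kxy; rewrite e; lia.
  have hyx : (y == x) = false by rewrite eq_sym.
  have kne : forall a b : signed n, a != b -> key a != key b.
    by move=> a b; apply: contra => /eqP /kinj ->.
  apply/setP => [[u v]]; rewrite !inE /f /= !permM /t.
  case: tpermP => [->|->|/eqP hux /eqP huy]; case: tpermP => [->|->|/eqP hvx /eqP hvy];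
    rewrite ?xpair_eqE ?eqxx ?hxy ?hyx /=;
    try (move: (kne _ _ hux) (kne _ _ huy); rewrite ?(negbTE hux) ?(negbTE huy) /=);
    try (move: (kne _ _ hvx) (kne _ _ hvy); rewrite ?(negbTE hvx) ?(negbTE hvy) /=);
    rewrite ?andbF ?andbT /=; try lia.
  all: idtac.
have hc : #|Inv (t * p) :\ (x,y)| = #|Inv p :\ (x,y)|.
  by rewrite e; exact: card_preimset.
rewrite hc !inE /= !permM /t tpermL tpermR kxy ltnSn /=.
have hxy : x != y by apply/eqP => e0; move: kxy; rewrite e0; lia.
move: (key (p x) < key (p y)) (key (p y) < key (p x)) => a b; by case: a; case: b => /=; rewrite ?addn0 ?add0n ?addn1 ?add1n.
Qed.


Lemma negsK n : involutive (@negs n).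
Proof. by case=> i b; rewrite /negs /= negbK. Qed.

Lemma negs_inj n : injective (@negs n).
Proof. exact: inv_inj (@negsK n). Qed.

Lemma inBP n (s : {perm signed n}) : reflect (forall x, s (negs x) = negs (s x)) (inB s).
Proof. by apply: (iffP forallP) => h x; apply/eqP; apply: h. Qed.

Lemma inB_mul n (s t : {perm signed n}) : inB s -> inB t -> inB (s * t)%g.
Proof. by move=> /inBP hs /inBP ht; apply/inBP => x; rewrite !permM hs ht. Qed.

Lemma inB_comp n (s t : {perm signed n}) : inB s -> inB t -> inB (Defs.comp s t).
Proof. by move=> hs ht; rewrite /Defs.comp; apply: inB_mul. Qed.

Lemma tperm_inj_map (T : finType) (f : T -> T) (finj : injective f) x y z :
  tperm (f x) (f y) (f z) = f (tperm x y z).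
Proof.
case: (tpermP x y z) => [->|->|/eqP hx /eqP hy]; rewrite ?tpermL ?tpermR //.
by rewrite tpermD // (inj_eq finj) eq_sym.
Qed.

Lemma tperm_fix (T : finType) (x y z : T) : x != z -> y != z -> tperm x y z = z.
Proof. exact: tpermD. Qed.

Lemma inB_gen n (i : 'I_n) : inB (gen i).
Proof.
apply/inBP => z; rewrite /gen; case: eqP => _.
  have -> : ((i, true) : signed n) = negs (i, false) by [].
  case: (tpermP (i, false) (negs (i, false)) z) => [->|->|/eqP hx /eqP hy];
    rewrite ?tpermL ?tpermR ?negsK //.
  rewrite tpermD //.
  all: try by rewrite (inj_eq (@negs_inj n)) eq_sym.
  all: try by apply: contra hy => /eqP e; rewrite e negsK.

set a : signed n := (_, false); set b : signed n := (i, false).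
have -> : ((Ordinal (pred_lt i), true) : signed n) = negs a by [].
have -> : ((i, true) : signed n) = negs b by [].
have fixp : forall w : signed n, w.2 -> tperm a b w = w.
  by case=> j c /= hc; rewrite tpermD //; apply/eqP => -[_ e]; rewrite -e in hc.
have fixn : forall w : signed n, ~~ w.2 -> tperm (negs a) (negs b) w = w.
  by case=> j c /= hc; rewrite tpermD //; apply/eqP => -[_ e]; rewrite -e in hc.
have sgn : forall w : signed n, (tperm a b w).2 = w.2.
  by move=> w; case: tpermP => [->|->|] //.
rewrite !permM.
case hz: z.2.
- rewrite (fixp z hz) fixn; last by rewrite sgn /negs /= hz.
  rewrite -{2}(negsK z) tperm_inj_map ?negsK //; exact: negs_inj.
- rewrite fixp; last by rewrite /negs /= hz.
  rewrite tperm_inj_map; last exact: negs_inj.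
  by rewrite fixn // sgn hz.
Qed.

Lemma tperm_sign n (a b z : signed n) : a.2 = b.2 -> (tperm a b z).2 = z.2.
Proof. by move=> e; case: tpermP => [->|->|] //. Qed.

Lemma genS_pos n (i : 'I_n) (z : signed n) : val i != 0 -> ~~ z.2 ->
  gen i z = tperm (Ordinal (pred_lt i), false) (i, false) z.
Proof.
move=> hi hz; rewrite /gen (negbTE hi) permM.
rewrite (@tpermD _ (Ordinal (pred_lt i), true) (i,true)) //.
- by apply/eqP => e; move: hz; rewrite -(@tperm_sign _ (Ordinal (pred_lt i), false) (i, false) z) // -e.
- by apply/eqP => e; move: hz; rewrite -(@tperm_sign _ (Ordinal (pred_lt i), false) (i, false) z) // -e.
Qed.

Lemma gen_sign n (i : 'I_n) (z : signed n) : val i != 0 -> (gen i z).2 = z.2.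
Proof.
move=> hi; case hz: z.2.
  rewrite -(negsK z) (inBP _ (inB_gen i)) /= genS_pos //.
    by rewrite tperm_sign //= hz.
  by rewrite /= hz.
by rewrite genS_pos ?hz // tperm_sign.
Qed.

Lemma gen_invol n (i : 'I_n) : (gen i * gen i = 1)%g.
Proof.
apply/permP => z; rewrite perm1 permM.
case: (eqVneq (val i) 0) => hi.
  by rewrite /gen hi eqxx tpermK.
have pos : forall w : signed n, ~~ w.2 -> gen i (gen i w) = w.
  move=> w hw; rewrite (genS_pos hi hw) genS_pos //; first by rewrite tpermK.
  by rewrite tperm_sign.
case hz: z.2; last by rewrite pos ?hz.
move: hz; have [w ->] : exists w, z = negs w by exists (negs z); rewrite negsK.
move=> hw; rewrite !(inBP _ (inB_gen i)) pos //.
Qed.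

Definition Npos n (s : {perm signed n}) : nat := #|[set x : signed n | ~~ x.2 && (s x).2]|.
Definition W n (s : {perm signed n}) : nat := #|Inv s| + Npos s.


Lemma W_gen0 n (s : {perm signed n}) (i : 'I_n) : inB s -> val i = 0 ->
  W (Defs.comp s (gen i)) + 2 * (s (i,false)).2 = W s + 2 * ~~ (s (i,false)).2.
Proof.
move=> /inBP hs hi.
have n0 : 0 < n by case: i hi => [[|k] h] //=.
set x : signed n := (i, true); set y : signed n := (i, false).
have hg : gen i = tperm x y by rewrite /gen hi eqxx tpermC.
have kxy : key y = (key x).+1 by rewrite /key /= hi; lia.
have sx : s x = negs (s y) by rewrite -hs.
have hI := Inv_adj s kxy.
have e1 : (key (s y) < key (s x)) = (s y).2.
  by rewrite sx key_negs -key_negE; have := key_lt (s y); lia.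
have e2 : (key (s x) < key (s y)) = ~~ (s y).2.
  by rewrite sx key_negs -key_negE; have := key_lt (s y); lia.
rewrite e1 e2 in hI.
have hN : Npos (tperm x y * s) + (s y).2 = Npos s + ~~ (s y).2.
  rewrite /Npos (cardsD1 y [set z | _ ]) (cardsD1 y [set z : signed n | ~~ z.2 && (s z).2]).
  have -> : [set z : signed n | ~~ z.2 && ((tperm x y * s)%g z).2] :\ y =
            [set z : signed n | ~~ z.2 && (s z).2] :\ y.
    apply/setP => z; rewrite !inE permM.
    case: tpermP => [->|->|_ _] //; by rewrite eqxx.
  rewrite !inE permM tpermR sx /=.
  by case: (s y).2 => /=; rewrite ?addn0 ?add0n ?addn1 ?add1n.
rewrite /W /Defs.comp hg.
set I1 := #|Inv (tperm x y * s)| in hI *; set I0 := #|Inv s| in hI *.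
set N1 := Npos (tperm x y * s) in hN *; set N0 := Npos s in hN *.
move: hI hN; case: (s y).2 => /=; lia.
Qed.

Lemma W_genS n (s : {perm signed n}) (i : 'I_n) : inB s -> val i != 0 ->
  W (Defs.comp s (gen i))
    + 2 * (key (s (i, false)) < key (s (Ordinal (pred_lt i), false)))
  = W s + 2 * (key (s (Ordinal (pred_lt i), false)) < key (s (i, false))).
Proof.
move=> /inBP hs hi.
set a : signed n := (Ordinal (pred_lt i), false); set b : signed n := (i, false).
set t1 := tperm a b; set t2 := tperm (negs b) (negs a).
have hi' : 0 < nat_of_ord i by rewrite lt0n.
have hg : gen i = (t1 * t2)%g.
  by rewrite /gen (negbTE hi) /t2 /t1 [tperm (negs b) _]tpermC.
have kab : key b = (key a).+1 by rewrite /key /=; have := ltn_ord i; lia.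
have kab' : key (negs a) = (key (negs b)).+1.
  by rewrite /key /=; have := ltn_ord i; lia.
have h1 := Inv_adj (t2 * s) kab.
have h2 := Inv_adj s kab'.
have fa : (t2 * s)%g a = s a by rewrite permM /t2 tpermD // xpair_eqE andbF.
have fb : (t2 * s)%g b = s b by rewrite permM /t2 tpermD // xpair_eqE andbF.
rewrite fa fb in h1.
rewrite !hs !key_negs in h2.
have := key_lt (s a); have := key_lt (s b); move=> la lb.
have hN : Npos (t1 * t2 * s) = Npos s.
  rewrite /Npos.
  have -> : [set z : signed n | ~~ z.2 && ((t1 * t2 * s)%g z).2] =
            (t1 * t2)%g @^-1: [set z : signed n | ~~ z.2 && (s z).2].
    apply/setP => z; rewrite !inE permM -hg gen_sign //.
  exact: card_preimset perm_inj.
rewrite /W /Defs.comp hg hN -mulgA.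
set I2 := #|Inv (t1 * (t2 * s))| in h1 *; set I1 := #|Inv (t2 * s)| in h1 h2 *.
set I0 := #|Inv s| in h2 *.
move: h1 h2; rewrite -/a -/b.
have kne : key (s a) != key (s b).
  by rewrite (inj_eq (@key_inj n)) (inj_eq perm_inj) /a /b xpair_eqE andbT -val_eqE /=; lia.
move: kne; lia.
Qed.


Lemma W1 n : W (1%g : {perm signed n}) = 0.
Proof.
rewrite /W /Npos.
have -> : Inv (1%g : {perm signed n}) = set0.
  by apply/setP => -[u v]; rewrite !inE !perm1 /=; apply/negbTE/negP => /andP [h1 h2]; move: h1 h2; lia.
rewrite cards0 add0n; apply/eqP; rewrite cards_eq0; apply/eqP/setP => z.
by rewrite !inE perm1 andNb.
Qed.

Lemma inB1 n : inB (1%g : {perm signed n}).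
Proof. by apply/inBP => x; rewrite !perm1. Qed.

Lemma W_step n (s : {perm signed n}) (i : 'I_n) : inB s ->
  (W (Defs.comp s (gen i)) + 2 = W s) \/ (W (Defs.comp s (gen i)) = W s + 2).
Proof.
move=> hs; case: (eqVneq (val i) 0) => hi.
  have := W_gen0 hs hi; case: (s (i,false)).2 => /=; lia.
have := W_genS hs hi.
set a : signed n := (Ordinal (pred_lt i), false).
have kne : key (s (i, false)) != key (s a).
  rewrite (inj_eq (@key_inj n)) (inj_eq perm_inj) /a xpair_eqE andbT -val_eqE /=.
  have : 0 < nat_of_ord i by rewrite lt0n.
  lia.
move: kne; lia.
Qed.

Lemma word_prod_rcons n (w : seq 'I_n) j :
  word_prod (rcons w j) = Defs.comp (word_prod w) (gen j).
Proof.
elim: w => [|k w IH] /=; first by rewrite /Defs.comp mulg1 mul1g.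
by rewrite IH /Defs.comp mulgA.
Qed.

Lemma inB_word n (w : seq 'I_n) : inB (word_prod w).
Proof.
elim: w => [|k w IH] /=; first exact: inB1.
exact: inB_comp (inB_gen k) IH.
Qed.

Lemma W_word n (w : seq 'I_n) : W (word_prod w) <= 2 * size w.
Proof.
elim/last_ind: w => [|w j IH]; first by rewrite /= W1.
rewrite word_prod_rcons size_rcons.
case: (W_step j (inB_word w)); lia.
Qed.

Lemma nodesc n (s : {perm signed n}) : inB s ->
  (forall i : 'I_n, W (Defs.comp s (gen i)) + 2 != W s) -> s = 1%g.
Proof.
case: n s => [|n] s hs hnd.
  by apply/permP => -[[k hk] b].
have pos0 : ~~ (s (ord0, false)).2.
  have := W_gen0 hs (erefl (val (@ord0 n))); have := hnd ord0.
  by case: (s (ord0, false)).2 => //= /eqP h1 h2; exfalso; apply: h1; lia.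
have step : forall i : 'I_n.+1, val i != 0 ->
    key (s (Ordinal (pred_lt i), false)) < key (s (i, false)).
  move=> i hi; have := W_genS hs hi; have := hnd i.
  have kne : key (s (i, false)) != key (s (Ordinal (pred_lt i), false)).
    rewrite (inj_eq (@key_inj _)) (inj_eq perm_inj) xpair_eqE andbT -val_eqE /=.
    have : 0 < nat_of_ord i by rewrite lt0n.
    lia.
  move: kne.
  case: (ltngtP (key (s (i, false))) (key (s (Ordinal (pred_lt i), false)))) => //= h _.
  move=> /eqP h1 h2; exfalso; apply: h1; move: h2; lia.
pose f m := key (s (inord m, false)).
have fS : forall m, m.+1 < n.+1 -> f m < f m.+1.
  move=> m hm.
  have hv : val (inord m.+1 : 'I_n.+1) != 0.
    by change (nat_of_ord (inord m.+1 : 'I_n.+1) != 0); rewrite inordK.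
  have := step _ hv; rewrite /f.
  have -> : (Ordinal (pred_lt (inord m.+1 : 'I_n.+1))) = inord m :> 'I_n.+1.
    by apply: val_inj; rewrite /= !inordK //; lia.
  by [].
have low : forall m, m < n.+1 -> n.+1 + m <= f m.
  elim=> [|m IH] hm.
    rewrite /f addn0; have -> : (inord 0 : 'I_n.+1) = ord0 by apply: val_inj; rewrite /= inordK.
    by move: pos0; rewrite -key_negE -leqNgt.
  have := IH (ltnW hm); have := fS m hm; lia.
have high : forall d, d < n.+1 -> f (n - d) + d < n.+1 + n.+1.
  elim=> [|d IH] hd.
    by rewrite addn0; exact: key_lt.
  have := IH (ltnW hd); have := fS (n - d.+1); rewrite -subSn; last by lia.
  rewrite subSS => /(_ ltac:(lia)); lia.
have fid : forall i : 'I_n.+1, s (i, false) = (i, false).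
  move=> i; apply: (@key_inj n.+1).
  have := low i (ltn_ord i); have := high (n - i) (ltac:(have := ltn_ord i; lia)).
  have -> : n - (n - i) = i by have := ltn_ord i; lia.
  rewrite /f inord_val /key /=; lia.
apply/permP => -[i b]; rewrite perm1.
case: b; last exact: fid.
have -> : ((i, true) : signed n.+1) = negs (i, false) by [].
by rewrite (inBP _ hs) fid.
Qed.

Lemma word_exists n (s : {perm signed n}) : inB s ->
  exists w : seq 'I_n, word_prod w = s /\ 2 * size w = W s.
Proof.
move=> hs0; have [k hk0] : exists k, W s <= k by exists (W s).
elim: k s hk0 hs0 => [|k IH] s hk hs.
  have s1 : s = 1%g.
    apply: (@nodesc _ s hs) => i; apply/eqP => e; move: hk; rewrite -e; lia.
  by exists [::]; rewrite s1 W1.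
case: (boolP [exists i : 'I_n, W (Defs.comp s (gen i)) + 2 == W s]).
  move=> /existsP [i /eqP hi].
  have hk2 : W (Defs.comp s (gen i)) <= k by move: hk; rewrite -hi; lia.
  have [w [hw1 hw2]] := IH _ hk2 (inB_comp hs (inB_gen i)).
  exists (rcons w i); split; last by rewrite size_rcons; lia.
  by rewrite word_prod_rcons hw1 /Defs.comp mulgA gen_invol mul1g.
rewrite negb_exists => /forallP hn.
have s1 : s = 1%g by apply: (@nodesc _ s hs) => i; have := hn i.
by exists [::]; rewrite s1 W1.
Qed.

Lemma card_perm_signed n : #|{perm signed n}| = (n + n)`!.
Proof.
have -> : #|{perm signed n}| = #|perm_on [set: signed n]|.
  by apply: eq_card => p; rewrite !inE; apply/esym/subsetP => x _; rewrite inE.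
by rewrite card_perm cardsT card_prod card_ord card_bool; congr (_`!); lia.
Qed.

Lemma W_bound n (s : {perm signed n}) : W s <= 2 * #|{perm signed n}|.
Proof.
have hT : #|{: signed n}| = n + n by rewrite card_prod card_ord card_bool; lia.
have hI : #|Inv s| + #|{: signed n}| <= #|{: signed n}| * #|{: signed n}|.
  have hd : #|[set (x, x) | x : signed n]| = #|{: signed n}|.
    by rewrite card_imset //; move=> x y [].
  have hU : #|Inv s :|: [set (x, x) | x : signed n]| <= #|{: signed n * signed n}|
    by apply: max_card.
  rewrite cardsU card_prod hd in hU.
  have e0 : Inv s :&: [set (x, x) | x : signed n] = set0.
    apply/setP => -[u v]; rewrite !inE.
    apply/negbTE/negP => /andP [/andP [h1 _] /imsetP [x _ [e1 e2]]].
    by move: h1; rewrite e1 e2 ltnn.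
  by rewrite e0 cards0 subn0 in hU.
have hN : Npos s <= #|{: signed n}| by apply: max_card.
rewrite card_perm_signed /W.
move: hI hN; rewrite hT.
have hF : forall m, m * m.-1 <= m`!.
  case=> [|m] //=; rewrite factS leq_mul2l fact_geq orbT //.
move=> h2 h3; have h1 := hF (n + n).
have key_ar : forall m F a b, m = n + n -> m * m.-1 <= F -> a + m <= m * m ->
    b <= m -> a + b <= 2 * F.
  by move=> m F a b ->; case: (posnP n) => hn; nia.
exact: key_ar (erefl _) h1 h2 h3.
Qed.


Lemma bigmin_le_seq (I : eqType) (r : seq I) (P : pred I) (F : I -> nat) M i0 :
  i0 \in r -> P i0 -> \big[minn/M]_(k <- r | P k) F k <= F i0.
Proof.
elim: r => [|x r IH] //=; rewrite inE big_cons => /orP [/eqP <- hP|hin hP].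
  by rewrite hP geq_minl.
case: (P x); last exact: IH.
by rewrite geq_min IH ?orbT.
Qed.

Lemma bigmin_eq (M m : nat) (P : pred 'I_M.+1) : m <= M -> P (inord m) ->
  (forall k : 'I_M.+1, P k -> m <= k) -> \big[minn/M]_(k < M.+1 | P k) k = m.
Proof.
move=> hmM hP hk; apply/eqP; rewrite eqn_leq; apply/andP; split.
  have := @bigmin_le_seq _ (index_enum 'I_M.+1) P (fun k => nat_of_ord k) M (inord m).
  by rewrite mem_index_enum inordK //; apply.
elim/big_ind: _ => //.
  by move=> x y hx hy; rewrite leq_min hx hy.
Qed.

Lemma lenB_W n (s : {perm signed n}) : inB s -> 2 * lenB s = W s.
Proof.
move=> hs.
have [w [hw1 hw2]] := word_exists hs.
have hb := W_bound s.
rewrite /lenB (@bigmin_eq _ (size w)) //.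
- lia.
- apply/existsP.
  have hsz : size w == nat_of_ord (inord (size w) : 'I_#|{perm signed n}|.+1).
    by rewrite inordK //; lia.
  by exists (Tuple hsz) => /=; rewrite hw1.
- move=> k /existsP [t /eqP ht].
  have := W_word t; rewrite ht size_tuple; lia.
Qed.

Lemma DesS_E n (s : {perm signed n}) (i : 'I_n) : inB s ->
  (i \in DesS s) =
  (0 < val i) && (key (s (i, false)) < key (s (Ordinal (pred_lt i), false))).
Proof.
move=> hs; rewrite inE.
case: (posnP (val i)) => hi //=.
have hi' : val i != 0 by rewrite -lt0n.
have h1 := lenB_W hs; have h2 := lenB_W (inB_comp hs (inB_gen i)).
have := W_genS hs hi'.
have kne : key (s (i, false)) != key (s (Ordinal (pred_lt i), false)).
  rewrite (inj_eq (@key_inj _)) (inj_eq perm_inj) xpair_eqE andbT -val_eqE /=.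
  have : 0 < nat_of_ord i by []. lia.
move: kne h1 h2.
case: (ltngtP (key (s (i, false))) (key (s (Ordinal (pred_lt i), false)))) => //= _ _;
  lia.
Qed.


Definition Vs n (s : {perm signed n}) : {set signed n} := [set s (i, false) | i : 'I_n].
Definition rk n (V : {set signed n}) (v : signed n) : nat := #|[set u in V | key u < key v]|.
Definition rV n (V : {set signed n}) (v : signed n) : signed n :=
  odflt v [pick u in V | rk V u == n.-1 - rk V v].
Definition Fphi n (s : {perm signed n}) (x : signed n) : signed n :=
  let y := rV (Vs s) (s (rev_ord x.1, false)) in if x.2 then negs y else y.
Definition phiB n (s : {perm signed n}) : {perm signed n} := insubd s [ffun x => Fphi s x].

Lemma phiE n (s : {perm signed n}) : injective (Fphi s) -> forall x, phiB s x = Fphi s x.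
Proof.
move=> hinj x.
have hb : injectiveb [ffun x => Fphi s x].
  by apply/injectiveP => a b; rewrite !ffunE; apply: hinj.
rewrite /phiB -pvalE.
change (val (insubd s [ffun x => Fphi s x]) x = Fphi s x).
by rewrite val_insubd hb ffunE.
Qed.

Lemma rk_lt n (V : {set signed n}) v : v \in V -> rk V v < #|V|.
Proof.
move=> hv; rewrite /rk (cardsD1 v V) hv add1n ltnS; apply: subset_leq_card.
by apply/subsetP => u; rewrite !inE => /andP [hu hk]; rewrite hu andbT; apply/eqP => e; move: hk; rewrite e ltnn.
Qed.

Lemma rk_mono n (V : {set signed n}) u v : u \in V -> v \in V -> key u < key v ->
  rk V u < rk V v.
Proof.
move=> hu hv huv; rewrite /rk (cardsD1 u [set w in V | key w < key v]) !inE hu huv /=.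
rewrite add1n ltnS; apply: subset_leq_card; apply/subsetP => w; rewrite !inE.
case/andP=> hw hk; rewrite hw (ltn_trans hk huv) !andbT.
by apply/eqP => e; move: hk; rewrite e ltnn.
Qed.

Lemma key_rk n (V : {set signed n}) u v : u \in V -> v \in V ->
  (key u < key v) = (rk V u < rk V v).
Proof.
move=> hu hv; case: (ltngtP (key u) (key v)) => h.
- by rewrite rk_mono.
- by have := rk_mono hv hu h; lia.
- by rewrite (key_inj h) ltnn.
Qed.

Lemma rk_inj n (V : {set signed n}) u v : u \in V -> v \in V -> rk V u = rk V v -> u = v.
Proof.
move=> hu hv e; case: (ltngtP (key u) (key v)) => h.
- by have := rk_mono hu hv h; rewrite e ltnn.
- by have := rk_mono hv hu h; rewrite e ltnn.
- exact: key_inj h.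
Qed.

Lemma rk_surj n (V : {set signed n.+1}) : #|V| = n.+1 ->
  forall r, r < n.+1 -> exists2 u, u \in V & rk V u = r.
Proof.
move=> hV r hr.
pose g := fun u : signed n.+1 => (inord (rk V u) : 'I_n.+1).
have ginj : {in V &, injective g}.
  move=> u v hu hv /(congr1 val); rewrite /g /= !inordK; last 2 first.
  - by move: (rk_lt hv); rewrite hV.
  - by move: (rk_lt hu); rewrite hV.
  exact: rk_inj.
have himg : g @: V = [set: 'I_n.+1].
  by apply/eqP; rewrite eqEcard subsetT cardsT card_ord /= (card_in_imset ginj) hV.
have : (inord r : 'I_n.+1) \in g @: V by rewrite himg inE.
case/imsetP => u hu /(congr1 val); rewrite /g /= !inordK //.
  by move=> e; exists u.
by move: (rk_lt hu); rewrite hV.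
Qed.

Lemma rV_spec n (V : {set signed n.+1}) v : #|V| = n.+1 -> v \in V ->
  rV V v \in V /\ rk V (rV V v) = n - rk V v.
Proof.
move=> hV hv; rewrite /rV; case: pickP => [u /andP [hu /eqP e] | none] /=.
  by [].
have [u hu e] := rk_surj hV (ltac:(lia) : n - rk V v < n.+1).
by have := none u; rewrite hu e eqxx.
Qed.

Lemma rV_in n (V : {set signed n.+1}) v : #|V| = n.+1 -> v \in V -> rV V v \in V.
Proof. by move=> hV hv; case: (rV_spec hV hv). Qed.

Lemma rV_invol n (V : {set signed n.+1}) v : #|V| = n.+1 -> v \in V -> rV V (rV V v) = v.
Proof.
move=> hV hv; have [h1 h2] := rV_spec hV hv; have [h3 h4] := rV_spec hV h1.
apply: (rk_inj h3 hv); rewrite h4 h2.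
have := rk_lt hv; rewrite hV; lia.
Qed.

Lemma rV_inj n (V : {set signed n.+1}) u v : #|V| = n.+1 -> u \in V -> v \in V ->
  rV V u = rV V v -> u = v.
Proof. by move=> hV hu hv e; rewrite -(rV_invol hV hu) e rV_invol. Qed.

Lemma rV_rev n (V : {set signed n.+1}) u v : #|V| = n.+1 -> u \in V -> v \in V ->
  (key (rV V u) < key (rV V v)) = (key v < key u).
Proof.
move=> hV hu hv; have [h1 h2] := rV_spec hV hu; have [h3 h4] := rV_spec hV hv.
rewrite (key_rk h1 h3) (key_rk hv hu) h2 h4.
have := rk_lt hu; have := rk_lt hv; rewrite hV; lia.
Qed.


Lemma Vs_card n (s : {perm signed n}) : #|Vs s| = n.
Proof.
rewrite /Vs card_imset ?card_ord //.
by move=> i j /perm_inj [].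
Qed.

Lemma Vs_in n (s : {perm signed n}) i : s (i, false) \in Vs s.
Proof. exact: imset_f. Qed.

Lemma Vs_disj n (s : {perm signed n}) y : inB s -> y \in Vs s -> negs y \notin Vs s.
Proof.
move=> /inBP hs /imsetP [i _ ->]; apply/negP => /imsetP [j _].
by rewrite -hs => /perm_inj.
Qed.

Lemma Fphi_inj n (s : {perm signed n.+1}) : inB s -> injective (Fphi s).
Proof.
move=> hs [i b] [j c]; rewrite /Fphi /=.
have hV := Vs_card s.
have hi := Vs_in s (rev_ord i); have hj := Vs_in s (rev_ord j).
have hri := rV_in hV hi; have hrj := rV_in hV hj.
have fin : forall b' c' : bool, rV (Vs s) (s (rev_ord i, false)) = rV (Vs s) (s (rev_ord j, false)) ->
    b' = c' -> (i, b') = (j, c').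
  move=> b' c' e1 ->; have := perm_inj (rV_inj hV hi hj e1); case => e.
  congr pair; apply: ord_inj; have := ltn_ord i; have := ltn_ord j; lia.
case: b; case: c => /= e.
- by apply: fin => //; apply: negs_inj.
- by have := Vs_disj hs hrj; rewrite -e negsK hri.
- by have := Vs_disj hs hri; rewrite e negsK hrj.
- exact: fin.
Qed.

Lemma phi_pos n (s : {perm signed n.+1}) i : inB s ->
  phiB s (i, false) = rV (Vs s) (s (rev_ord i, false)).
Proof. by move=> hs; rewrite phiE //; exact: Fphi_inj. Qed.

Lemma inB_phi n (s : {perm signed n.+1}) : inB s -> inB (phiB s).
Proof.
move=> hs; apply/inBP => x; rewrite !phiE; try exact: Fphi_inj.
by case: x => i [] //=; rewrite /Fphi /= negsK.
Qed.

Lemma Vs_phi n (s : {perm signed n.+1}) : inB s -> Vs (phiB s) = Vs s.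
Proof.
move=> hs; apply/eqP; rewrite eqEcard !Vs_card leqnn andbT.
apply/subsetP => y /imsetP [i _ ->]; rewrite phi_pos //.
exact: rV_in (Vs_card s) (Vs_in s _).
Qed.

Lemma phi_invol n (s : {perm signed n.+1}) : inB s -> phiB (phiB s) = s.
Proof.
move=> hs; have hs' := inB_phi hs.
have pos : forall i, phiB (phiB s) (i, false) = s (i, false).
  move=> i; rewrite phi_pos // Vs_phi // phi_pos // rev_ordK.
  exact: rV_invol (Vs_card s) (Vs_in s _).
apply/permP => -[i []]; last exact: pos.
have -> : ((i, true) : signed n.+1) = negs (i, false) by [].
by rewrite (inBP _ (inB_phi hs')) (inBP _ hs) pos.
Qed.

Lemma NegB_inv n (t : {perm signed n}) : inB t ->
  NegB (t^-1)%g = [set i | (i, true) \in Vs t].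
Proof.
move=> /inBP ht; apply/setP => i; rewrite !inE.
apply/idP/idP.
  case e: (t^-1 (i, false))%g => [j []] // _.
  have : t (j, true) = (i, false) by rewrite -e permKV.
  have -> : ((j, true) : signed n) = negs (j, false) by [].
  rewrite ht => e2; apply/imsetP; exists j => //.
  by rewrite -[t (j, false)]negsK e2.
case/imsetP => j _ e.
have : t (j, true) = (i, false).
  have -> : ((j, true) : signed n) = negs (j, false) by [].
  by rewrite ht -e.
by move=> <-; rewrite permK.
Qed.

Lemma Des_phi n (s : {perm signed n.+1}) (j : 'I_n.+1) : inB s ->
  (j \in DesS (phiB s)) = (0 < val j) && ((inord (n.+1 - j) : 'I_n.+1) \in DesS s).
Proof.
move=> hs; rewrite (DesS_E _ (inB_phi hs)) (DesS_E _ hs).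
case: (posnP (val j)) => hj //=.
have hj' : 0 < nat_of_ord j by [].
have hv : nat_of_ord (inord (n.+1 - j) : 'I_n.+1) = n.+1 - j.
  by rewrite inordK //; lia.
rewrite !phi_pos // rV_rev; try exact: Vs_card; try exact: Vs_in.
have -> : rev_ord (Ordinal (pred_lt j)) = inord (n.+1 - j).
  by apply: ord_inj; rewrite hv /=; lia.
have -> : rev_ord j = Ordinal (pred_lt (inord (n.+1 - j) : 'I_n.+1)).
  by apply: ord_inj; rewrite /= hv; lia.
have -> : 0 < \val (inord (n.+1 - j) : 'I_n.+1) by change (0 < nat_of_ord (inord (n.+1 - j) : 'I_n.+1)); rewrite hv; have := ltn_ord j; lia.
by [].
Qed.

Lemma sum_rev n (P Q : pred 'I_n.+1) :
  (forall i, P i -> 0 < val i) ->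
  (forall j : 'I_n.+1, Q j = (0 < val j) && P (inord (n.+1 - j))) ->
  \sum_(i | P i) val i = \sum_(j | Q j) (n.+1 - val j).
Proof.
move=> hP hQ.
pose h := fun i : 'I_n.+1 => (inord (if val i == 0 then 0 else n.+1 - i) : 'I_n.+1).
have hv : forall i, nat_of_ord (h i) = if val i == 0 then 0 else n.+1 - i.
  move=> i; rewrite /h inordK //; case: eqP => // hne; have hne' : nat_of_ord i <> 0 := hne; lia.
have hK : cancel h h.
  move=> i; apply: ord_inj; rewrite hv.
  rewrite (_ : \val (h i) = nat_of_ord (h i)) // hv.
  rewrite (_ : \val i = nat_of_ord i) //.
  have hi := ltn_ord i.
  have [e|e] := eqVneq (nat_of_ord i) 0; first by rewrite e.
  rewrite (_ : (n.+1 - i == 0) = false); first by lia.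
  by apply/eqP; lia.
rewrite (reindex_inj (can_inj hK)) /=.
apply: eq_big => i.
  rewrite hQ.
  case: (eqVneq (val i) 0) => e.
    rewrite e /=; case hPi: (P (h i)) => //.
    by have := hP _ hPi; rewrite (_ : \val (h i) = nat_of_ord (h i)) // hv e.
  have -> : h i = inord (n.+1 - i).
    apply: ord_inj; rewrite hv (negbTE e) inordK //; have := ltn_ord i; have e' : nat_of_ord i != 0 := e; lia.
  by rewrite lt0n e.
move=> hPi; have := hP _ hPi.
rewrite (_ : \val (h i) = nat_of_ord (h i)) // hv.
by case: eqP => //.
Qed.


Theorem lemma2p29 (n : nat) : 1 <= n ->
  exists phi : {perm signed n} -> {perm signed n},
    (forall s, inB s -> inB (phi s)) /\
    (forall s, inB s -> phi (phi s) = s) /\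
    (forall s, inB s ->
       majB s = rmajB (phi s) /\ NegB (s^-1)%g = NegB ((phi s)^-1)%g).
Proof.
case: n => [//|n] _.
exists (@phiB n.+1); split; first exact: inB_phi.
split; first exact: phi_invol.
move=> s hs; split.
  rewrite /majB /rmajB; apply: sum_rev.
    by move=> i; rewrite DesS_E // => /andP [].
  by move=> j; rewrite Des_phi.
by rewrite !NegB_inv ?inB_phi // Vs_phi.
Qed.
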